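(* Let $\boldsymbol x^*$ be a pure Nash equilibrium of $\mathcal L(n,S)$ satisfying the vertex property, and let $[a,b]$ be an $\boldsymbol x^*$-half interval. Then $\lambda([a,b])\le\Lambda/n$, where $\Lambda=\lambda(S)$.
   Context: Network: $(V,E)$ is a finite connected graph with no vertex of degree $2$; each edge $e$ has a length $\lambda(e)>0$. $S$ is the metric measure space obtained by identifying each edge with a segment of length $\lambda(e)$, with length measure $\lambda$ and shortest-path distance $d$. A leaf is a vertex of degree $1$. Location game $\mathcal L(n,S)$: $n$ players each choose a point of $S$. Consumers are distributed according to $\lambda$, and each shops at a closest occupied location. Consumers equidistant from several closest occupied locations are split equally among those locations, and the share of a location is split equally among the players located there. Payoff is the mass of consumers attracted. Nash equilibria are pure. Vertex property: every vertex of degree $\ge3$ is occupied. For a profile $\boldsymbol x$ with the vertex property, a segment $[a,b]$ contained in an edge $e$ is an $\boldsymbol x$-half interval if one of the following holds (with the roles of $a$ and $b$ interchangeable): (i) $a=x_i$ for some player $i$, $b$ is a leaf endpoint of $e$, and no player is located in $(a,b]$; (ii) $a=x_i$ and $x_\ell\in e$ for players $i,\ell$, no player is located strictly between $a$ and $x_\ell$, and $b$ is the midpoint between $a$ and $x_\ell$. *)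

(* Defs.v *)
From Stdlib Require Import Reals ClassicalEpsilon.
From mathcomp Require Import all_boot.
Set Implicit Arguments. Unset Strict Implicit. Unset Printing Implicit Defensive.

Local Open Scope R_scope.

Definition leRb (a b : R) : bool := if Rle_dec a b then true else false.
Definition eqRb (a b : R) : bool := if Req_EM_T a b then true else false.

(* infimum of a nonempty set bounded below (0 otherwise, never used) *)
Definition Rinf (A : R -> Prop) : R :=
  match excluded_middle_informative
          (bound (fun y => A (- y)) /\ exists y, A (- y)) with
  | left H => - proj1_sig (completeness _ (proj1 H) (proj2 H))
  | right _ => 0
  end.

(* Riemann integral of f over [a,b] (0 if f is not Riemann integrable) *)
Definition RInt (f : R -> R) (a b : R) : R :=
  match excluded_middle_informative
          (exists v, exists pr : Riemann_integrable f a b, RiemannInt pr = v) with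
  | left H => proj1_sig (constructive_indefinite_description _ H)
  | right _ => 0
  end.

(* Each edge e joins src e and tgt e and is identified with the segment
   [0, len e]; parameter t measures the distance from src e. *)
Record network := Network {
  V : finType;
  E : finType;
  src : E -> V;
  tgt : E -> V;
  len : E -> R }.

Section Net.
Variable N : network.
Local Notation V := (V N).
Local Notation E := (E N).
Local Notation src := (@src N).
Local Notation tgt := (@tgt N).
Local Notation len := (@len N).

Definition incident (v : V) (e : E) : bool := (src e == v) || (tgt e == v).
Definition deg (v : V) : nat := #|[pred e | incident v e]|.
Definition leaf (v : V) : Prop := deg v = 1%N.
Definition adj : rel V :=
  fun u v => [exists e : E, ((src e == u) && (tgt e == v)) || ((src e == v) && (tgt e == u))].

Definition good_network : Prop :=
  (forall e, src e <> tgt e) /\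
  (forall e f, ((src e = src f /\ tgt e = tgt f) \/ (src e = tgt f /\ tgt e = src f)) -> e = f) /\
  (forall u v : V, connect adj u v) /\
  (forall v : V, deg v <> 2%N) /\
  (forall e, 0 < len e).

Definition Lambda : R := \big[Rplus/0]_(e : E) len e.

Definition point := (E * R)%type.
Definition valid_point (p : point) : Prop := 0 <= p.2 <= len p.1.

Definition vertex_of (p : point) : option V :=
  if eqRb p.2 0 then Some (src p.1)
  else if eqRb p.2 (len p.1) then Some (tgt p.1) else None.

(* equality of points of the quotient space S (edge endpoints identified) *)
Definition samept (p q : point) : bool :=
  ((p.1 == q.1) && eqRb p.2 q.2) ||
  ((vertex_of p == vertex_of q) && (vertex_of p != None)).

Fixpoint walk_end (u : V) (w : seq E) : option V :=
  match w with
  | [::] => Some u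
  | e :: w' => if src e == u then walk_end (tgt e) w'
               else if tgt e == u then walk_end (src e) w' else None
  end.
Definition walk_len (w : seq E) : R := \big[Rplus/0]_(e <- w) len e.

Definition dV (u v : V) : R :=
  Rinf (fun L => exists w, walk_end u w = Some v /\ L = walk_len w).

Definition dist (p q : point) : R :=
  let ep := [:: (src p.1, p.2); (tgt p.1, len p.1 - p.2)] in
  let eq := [:: (src q.1, q.2); (tgt q.1, len q.1 - q.2)] in
  let via := foldr Rmin (dV (src p.1) (src q.1) + p.2 + q.2)
               [seq a.2 + dV a.1 b.1 + b.2 | a <- ep, b <- eq] in
  if p.1 == q.1 then Rmin (Rabs (p.2 - q.2)) via else via.

Definition profile (n : nat) := 'I_n -> point.

Definition valid_profile n (x : profile n) : Prop := forall i, valid_point (x i).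

Definition closest n (x : profile n) (c : point) (i : 'I_n) : bool :=
  [forall j, leRb (dist c (x i)) (dist c (x j))].

(* number of distinct closest occupied locations to c *)
Definition nb_closest_locs n (x : profile n) (c : point) : nat :=
  #|[pred j | closest x c j && [forall k : 'I_n, (k < j)%N ==> ~~ samept (x k) (x j)]]|.

Definition nb_colocated n (x : profile n) (i : 'I_n) : nat :=
  #|[pred j | samept (x j) (x i)]|.

Definition share n (x : profile n) (i : 'I_n) (c : point) : R :=
  if closest x c i then / (INR (nb_closest_locs x c) * INR (nb_colocated x i)) else 0.

Definition payoff n (x : profile n) (i : 'I_n) : R :=
  \big[Rplus/0]_(e : E) RInt (fun t => share x i (e, t)) 0 (len e).

Definition deviate n (x : profile n) (i : 'I_n) (y : point) : profile n :=
  fun j => if j == i then y else x j.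

Definition nash_equilibrium n (x : profile n) : Prop :=
  valid_profile x /\
  forall i y, valid_point y -> payoff (deviate x i y) i <= payoff x i.

Definition vertex_property n (x : profile n) : Prop :=
  forall v : V, (3 <= deg v)%N -> exists i, vertex_of (x i) = Some v.

Definition strictly_between (s t u : R) : Prop :=
  (s < t < u) \/ (u < t < s).

(* [a,b] ⊆ e with a = (e,sa), b = (e,sb) is an x-half interval
   (the endpoint named a is the one at a player). *)
Definition half_interval n (x : profile n) (e : E) (sa sb : R) : Prop :=
  0 <= sa <= len e /\ 0 <= sb <= len e /\
  (
    ((exists i, samept (x i) (e, sa)) /\
     ((sb = 0 /\ leaf (src e)) \/ (sb = len e /\ leaf (tgt e))) /\
     (forall j t, (strictly_between sa t sb \/ t = sb) ->
                  ~~ samept (x j) (e, t)))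
  \/
    (exists i l tl,
       samept (x i) (e, sa) /\ 0 <= tl <= len e /\ samept (x l) (e, tl) /\
       (forall j t, strictly_between sa t tl -> ~~ samept (x j) (e, t)) /\
       sb = (sa + tl) / 2) ).

End Net.

(* Main.v *)
Require Import Defs.
From Stdlib Require Import Reals Lra Classical ClassicalEpsilon.
From mathcomp Require Import all_boot.
From Coquelicot Require Coquelicot.
From HB Require Import structures.
Local Open Scope R_scope.
Set Implicit Arguments. Unset Strict Implicit.

Module Aux.
HB.instance Definition _ := Monoid.isComLaw.Build R 0 Rplus (fun a b c => esym (Rplus_assoc a b c)) Rplus_comm Rplus_0_l.
Import Coquelicot.Coquelicot.

Lemma RInt_eq (f : R -> R) a b : ex_RInt f a b -> Defs.RInt f a b = RInt f a b.
Proof.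
move=> H; have pr := ex_RInt_Reals_0 _ _ _ H.
rewrite /Defs.RInt; case: excluded_middle_informative => [h|h].
- case: constructive_indefinite_description => v [pr' Hv] /=.
  by rewrite -Hv (RInt_Reals _ _ _ pr); apply RiemannInt_P5.
- exfalso; apply h; exists (RiemannInt pr), pr; reflexivity.
Qed.

Definition rc (f : R -> R) t := exists d, 0 < d /\
  forall u v, t < u < t + d -> t < v < t + d -> f u = f v.
Definition lc (f : R -> R) t := exists d, 0 < d /\
  forall u v, t - d < u < t -> t - d < v < t -> f u = f v.

Lemma ex_RInt_lconst (f : R -> R) a b : a < b ->
  (forall u v, a < u < b -> a < v < b -> f u = f v) -> ex_RInt f a b.
Proof.
move=> ab H; apply ex_RInt_ext with (fun _ => f ((a+b)/2)); last first.
  exact: ex_RInt_const.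
move=> y; rewrite Rmin_left ?Rmax_right; try lra; move=> Hy.
apply H; lra.
Qed.

Lemma LC_int (f : R -> R) a b : a <= b -> (forall t, a <= t < b -> rc f t) ->
  (forall t, a < t <= b -> lc f t) -> ex_RInt f a b.
Proof.
move=> ab Hr Hl.
set S := fun s => a <= s <= b /\ ex_RInt f a s.
have bS : bound S by exists b => s [[_ ?] _].
have neS : exists s, S s by exists a; split; [lra| exact: ex_RInt_point].
case: (completeness S bS neS) => m [Hub Hlub].
have am : a <= m by apply Hub; split; [lra| exact: ex_RInt_point].
have mb : m <= b by apply Hlub => s [[_ ?] _].
have Sm : S m.
  case: (Req_dec m a) => [Hma|ma]; first by rewrite Hma; split; [lra| exact: ex_RInt_point].
  have [d [d0 Hd]] := Hl m (conj (ltac:(lra) : a < m) mb).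
  set d' := Rmin d (m - a).
  have d'0 : 0 < d' by apply Rmin_glb_lt; lra.
  have d'd : d' <= d by apply Rmin_l.
  case: (classic (exists s, S s /\ m - d' < s)) => [[s [[Ss1 Ss2] Ss3]]|hn].
    have sm : s <= m by apply Hub.
    case: (Req_dec s m) => [<-|sm']; first by [].
    split; first lra.
    apply ex_RInt_Chasles with s => //.
    apply ex_RInt_lconst; first lra.
    move=> u v Hu Hv; apply Hd; lra.
  exfalso.
  have : m <= m - d'.
    apply Hlub => s Ss; apply Rnot_lt_le => hs; apply hn; exists s; split => //.
  lra.
case: (Rle_lt_or_eq_dec m b mb) => [mb'|<-]; last by case: Sm.
have [d [d0 Hd]] := Hr m (conj am mb').
set s' := Rmin (m + d/2) b.
have ms' : m < s' by apply Rmin_glb_lt; lra.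
have s'b : s' <= b by apply Rmin_r.
have s'd : s' <= m + d/2 by apply Rmin_l.
have : s' <= m.
  apply Hub; split; first lra.
  apply ex_RInt_Chasles with m; first by case: Sm.
  apply ex_RInt_lconst; first lra.
  move=> u v Hu Hv; apply Hd; lra.
lra.
Qed.

Lemma RInt_big (I : Type) (s : seq I) (F : I -> R -> R) a b :
  (forall i, ex_RInt (F i) a b) ->
  ex_RInt (fun t => \big[Rplus/0]_(i <- s) F i t) a b /\
  RInt (fun t => \big[Rplus/0]_(i <- s) F i t) a b = \big[Rplus/0]_(i <- s) RInt (F i) a b.
Proof.
move=> HF; elim: s => [|i s [IH1 IH2]].
  have E0 : forall t, \big[Rplus/0]_(i <- [::]) F i t = 0 by move=> t; rewrite big_nil.
  split.
    apply ex_RInt_ext with (fun _ => 0); first by move=> t _; rewrite E0.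
    exact: ex_RInt_const.
  rewrite big_nil (RInt_ext _ (fun _ => 0)); last by move=> t _; rewrite E0.
  rewrite RInt_const /scal /= /mult /=; ring.
have E1 : forall t, \big[Rplus/0]_(j <- i :: s) F j t = plus (F i t) (\big[Rplus/0]_(j <- s) F j t)
  by move=> t; rewrite big_cons.
split.
  apply ex_RInt_ext with (fun t => plus (F i t) (\big[Rplus/0]_(j <- s) F j t)).
    by move=> t _; rewrite E1.
  exact: ex_RInt_plus.
rewrite big_cons (RInt_ext _ (fun t => plus (F i t) (\big[Rplus/0]_(j <- s) F j t))).
  by rewrite RInt_plus // IH2.
by move=> t _; rewrite E1.
Qed.

Definition rcT {A : Type} (f : R -> A) t := exists d, 0 < d /\
  forall u v, t < u < t + d -> t < v < t + d -> f u = f v.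

Definition rA (g : R -> R) t := exists d a b, 0 < d /\
  forall u, t < u < t + d -> g u = a + b * u.

Lemma rA_aff a b t : rA (fun u => a + b * u) t.
Proof. exists 1, a, b; split; [lra| by []]. Qed.
Lemma rA_const c t : rA (fun _ => c) t.
Proof. exists 1, c, 0; split; [lra| move=> u _; ring]. Qed.
Lemma rA_id t : rA (fun u => u) t.
Proof. exists 1, 0, 1; split; [lra| move=> u _; ring]. Qed.

Lemma rA_plus g1 g2 t : rA g1 t -> rA g2 t -> rA (fun u => g1 u + g2 u) t.
Proof.
move=> [d1 [a1 [b1 [h1 H1]]]] [d2 [a2 [b2 [h2 H2]]]].
exists (Rmin d1 d2), (a1 + a2), (b1 + b2); split; first by apply Rmin_glb_lt.
move=> u Hu; have := Rmin_l d1 d2; have := Rmin_r d1 d2 => ??.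
rewrite H1 ?H2; try lra; ring.
Qed.
Lemma rA_minus g1 g2 t : rA g1 t -> rA g2 t -> rA (fun u => g1 u - g2 u) t.
Proof.
move=> [d1 [a1 [b1 [h1 H1]]]] [d2 [a2 [b2 [h2 H2]]]].
exists (Rmin d1 d2), (a1 - a2), (b1 - b2); split; first by apply Rmin_glb_lt.
move=> u Hu; have := Rmin_l d1 d2; have := Rmin_r d1 d2 => ??.
rewrite H1 ?H2; try lra; ring.
Qed.
Lemma rA_mulc c g t : rA g t -> rA (fun u => c * g u) t.
Proof.
move=> [d1 [a1 [b1 [h1 H1]]]].
exists d1, (c * a1), (c * b1); split => // u Hu; rewrite H1 //; ring.
Qed.

Lemma rA_opp g t : rA g t -> rA (fun u => - g u) t.
Proof.
move=> [d1 [a1 [b1 [h1 H1]]]].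
exists d1, (- a1), (- b1); split => // u Hu; rewrite H1 //; ring.
Qed.

Lemma sign_aff c k t : exists d, 0 < d /\
  ((forall u, t < u < t + d -> c + k * u <= 0) \/
   (forall u, t < u < t + d -> 0 < c + k * u)).
Proof.
case: (Rtotal_order (c + k * t) 0) => [Hn|[Hz|Hp]].
- exists ((- (c + k*t)) / (Rabs k + 1)); split.
    apply Rdiv_lt_0_compat; first lra; have := Rabs_pos k; lra.
  left => u Hu.
  have Hk := Rabs_pos k.
  have : Rabs k * (u - t) < - (c + k*t).
    have E : - (c + k * t) = (Rabs k + 1) * ((- (c + k*t)) / (Rabs k + 1)) by field; lra.
    rewrite E; apply Rle_lt_trans with ((Rabs k + 1) * (u - t)); first nra.
    apply Rmult_lt_compat_l; lra.
  have : k * (u - t) <= Rabs k * (u - t).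
    apply Rmult_le_compat_r; [lra| apply Rle_abs].
  nra.
- exists 1; split; first lra.
  case: (Rle_lt_dec k 0) => Hk; [left|right] => u Hu.
    have -> : c + k * u = k * (u - t) by nra.
    nra.
  have -> : c + k * u = k * (u - t) by nra.
  nra.
- exists ((c + k*t) / (Rabs k + 1)); split.
    apply Rdiv_lt_0_compat; first lra; have := Rabs_pos k; lra.
  right => u Hu.
  have Hk := Rabs_pos k.
  have : Rabs k * (u - t) < (c + k*t).
    have E : (c + k * t) = (Rabs k + 1) * ((c + k*t) / (Rabs k + 1)) by field; lra.
    rewrite {1}E; apply Rle_lt_trans with ((Rabs k + 1) * (u - t)); first nra.
    apply Rmult_lt_compat_l; lra.
  have : - k * (u - t) <= Rabs k * (u - t).
    apply Rmult_le_compat_r; first lra.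
    rewrite -Rabs_Ropp; apply Rle_abs.
  nra.
Qed.

Lemma rA_cmp g1 g2 t : rA g1 t -> rA g2 t -> exists d, 0 < d /\
  ((forall u, t < u < t + d -> g1 u <= g2 u) \/
   (forall u, t < u < t + d -> g2 u < g1 u)) /\
  exists a1 b1 a2 b2, forall u, t < u < t + d -> g1 u = a1 + b1 * u /\ g2 u = a2 + b2 * u.
Proof.
move=> [d1 [a1 [b1 [h1 H1]]]] [d2 [a2 [b2 [h2 H2]]]].
have [d3 [h3 H3]] := sign_aff (a1 - a2) (b1 - b2) t.
have m1 : 0 < Rmin d1 (Rmin d2 d3) by repeat apply Rmin_glb_lt.
have l1 := Rmin_l d1 (Rmin d2 d3).
have l2 := Rmin_r d1 (Rmin d2 d3).
have l3 := Rmin_l d2 d3. have l4 := Rmin_r d2 d3.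
exists (Rmin d1 (Rmin d2 d3)); split => //; split; last first.
  exists a1, b1, a2, b2 => u Hu; split; [apply H1| apply H2]; lra.
case: H3 => H3; [left|right] => u Hu; rewrite H1 ?H2; try lra;
  have := H3 u ltac:(lra); lra.
Qed.

Lemma rA_min g1 g2 t : rA g1 t -> rA g2 t -> rA (fun u => Rmin (g1 u) (g2 u)) t.
Proof.
move=> h1 h2; have [d [hd [HH [a1 [b1 [a2 [b2 Hab]]]]]]] := rA_cmp h1 h2.
case: HH => HH.
  exists d, a1, b1; split => // u Hu; rewrite Rmin_left; [apply Hab| apply HH] => //.
exists d, a2, b2; split => // u Hu; rewrite Rmin_right; [apply Hab| apply Rlt_le, HH] => //.
Qed.

Lemma rA_abs g t : rA g t -> rA (fun u => Rabs (g u)) t.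
Proof.
move=> h; have [d [hd [HH [a1 [b1 [a2 [b2 Hab]]]]]]] := rA_cmp h (rA_const 0 t).
case: HH => HH.
  exists d, (-a1), (-b1); split => // u Hu; rewrite Rabs_left1; last by apply HH.
  rewrite (proj1 (Hab u Hu)); ring.
exists d, a1, b1; split => // u Hu; rewrite Rabs_right; last by apply Rle_ge, Rlt_le, HH.
exact: (proj1 (Hab u Hu)).
Qed.

Lemma rc_leRb g1 g2 t : rA g1 t -> rA g2 t -> rcT (fun u => leRb (g1 u) (g2 u)) t.
Proof.
move=> h1 h2; have [d [hd [HH _]]] := rA_cmp h1 h2.
exists d; split => // u v Hu Hv; rewrite /leRb.
case: (Rle_dec (g1 u) (g2 u)) => a; case: (Rle_dec (g1 v) (g2 v)) => b //;
  case: HH => HH; exfalso.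
- by apply b, HH.
- by have := HH u Hu; lra.
- by apply a, HH.
- by have := HH v Hv; lra.
Qed.

Lemma rc_fin (T : finType) (A : Type) (F : T -> R -> A) t :
  (forall x, rcT (F x) t) -> exists d, 0 < d /\
  forall u v, t < u < t + d -> t < v < t + d -> forall x, F x u = F x v.
Proof.
move=> H.
suff : forall s : seq T, exists d, 0 < d /\
  forall u v, t < u < t + d -> t < v < t + d -> forall x, x \in s -> F x u = F x v.
  move=> /(_ (enum T)) [d [hd Hd]]; exists d; split => // u v Hu Hv x.
  by apply Hd => //; rewrite mem_enum.
elim => [|y s [d [hd Hd]]]; first by exists 1; split => //; lra.
have [d' [hd' Hd']] := H y.
exists (Rmin d d'); split; first by apply Rmin_glb_lt.
have := Rmin_l d d'; have := Rmin_r d d' => ??.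
move=> u v Hu Hv x; rewrite in_cons => /orP [/eqP ->|xs].
  apply Hd'; lra.
apply Hd => //; lra.
Qed.

Ltac rA_step := first [ apply rA_const | apply rA_id | apply rA_min | apply rA_abs
  | apply rA_plus | apply rA_minus | apply rA_mulc | apply rA_opp ].

Lemma dist_rA N (e : E N) q al be t : rA (fun u => Defs.dist (e, al + be*u) q) t.
Proof. rewrite /Defs.dist /=; case: (e == q.1); repeat rA_step. Qed.

Lemma share_eq N n (x : profile N n) j (c c' : point N) :
  (forall i k, leRb (Defs.dist c (x i)) (Defs.dist c (x k)) =
               leRb (Defs.dist c' (x i)) (Defs.dist c' (x k))) ->
  share x j c = share x j c'.
Proof.
move=> H.
have Hc : forall i, closest x c i = closest x c' i.
  by move=> i; apply: eq_forallb => k; apply H.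
have Hn : nb_closest_locs x c = nb_closest_locs x c'.
  by apply: eq_card => k; rewrite !inE Hc.
by rewrite /share Hc Hn.
Qed.

Lemma share_rc N n (x : profile N n) j (e : E N) al be t :
  rcT (fun u => share x j (e, al + be * u)) t.
Proof.
have := @rc_fin ('I_n * 'I_n)%type bool
  (fun p u => leRb (Defs.dist (e, al + be*u) (x p.1)) (Defs.dist (e, al + be*u) (x p.2))) t.
case.
  move=> p; apply rc_leRb; apply dist_rA.
move=> d [hd Hd]; exists d; split => // u v Hu Hv.
apply share_eq => i k; exact: (Hd u v Hu Hv (i, k)).
Qed.

Lemma share_int N n (x : profile N n) j (e : E N) a b : a <= b ->
  ex_RInt (fun u => share x j (e, u)) a b.
Proof.
move=> ab; apply LC_int => // t _.
  have [d [hd Hd]] := share_rc x j e 0 1 t.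
  exists d; split => // u v Hu Hv.
  have := Hd u v Hu Hv; by rewrite !Rplus_0_l !Rmult_1_l.
have [d [hd Hd]] := share_rc x j e 0 (-1) (-t).
exists d; split => // u v Hu Hv.
have := Hd (-u) (-v) ltac:(lra) ltac:(lra).
by rewrite !Rplus_0_l -!Ropp_mult_distr_l !Rmult_1_l !Ropp_involutive.
Qed.

Lemma Rinf_le (A : R -> Prop) m a : (forall x, A x -> m <= x) -> A a -> Rinf A <= a.
Proof.
move=> Hm Ha; rewrite /Rinf; case: excluded_middle_informative => [h|h].
  case: completeness => l [Hub _] /=.
  have Ha' : A (- - a) by rewrite Ropp_involutive.
  have := Hub (- a) Ha'; lra.
exfalso; apply h; split; last by exists (- a); rewrite /= Ropp_involutive.
exists (- m) => y Hy; have := Hm _ Hy; lra.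
Qed.

Lemma Rinf_ge (A : R -> Prop) m : (forall x, A x -> m <= x) -> (exists a, A a) -> m <= Rinf A.
Proof.
move=> Hm [a Ha]; rewrite /Rinf; case: excluded_middle_informative => [h|h].
  case: completeness => l [_ Hl] /=.
  suff : l <= - m by lra.
  apply Hl => y Hy; have := Hm _ Hy; lra.
exfalso; apply h; split; last by exists (- a); rewrite /= Ropp_involutive.
exists (- m) => y Hy; have := Hm _ Hy; lra.
Qed.

Section Walks.
Variable N : network.
Hypothesis G : good_network N.

Lemma len_ge0 (f : E N) : 0 <= len f.
Proof. case: G => _ [_ [_ [_ H]]]; apply Rlt_le, H. Qed.

Lemma walk_len_cons (f : E N) (w : seq (E N)) : walk_len (f :: w) = len f + walk_len w.
Proof. by rewrite /walk_len big_cons. Qed.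

Lemma walk_len_ge0 (w : seq (E N)) : 0 <= walk_len w.
Proof.
elim: w => [|f w IH]; first by rewrite /walk_len big_nil; lra.
rewrite walk_len_cons; have := len_ge0 f; lra.
Qed.

Lemma walk_len_cat (w1 w2 : seq (E N)) : walk_len (w1 ++ w2) = walk_len w1 + walk_len w2.
Proof. by rewrite /walk_len big_cat. Qed.

Lemma walk_end_cat (u : V N) (w1 w2 : seq (E N)) :
  walk_end u (w1 ++ w2) = obind (fun a => walk_end a w2) (walk_end u w1).
Proof.
elim: w1 u => [|f w IH] u //=.
case: (src f == u); first by apply IH.
by case: (tgt f == u).
Qed.

Lemma walk_exists (u v : V N) : exists w, walk_end u w = Some v.
Proof.
case: G => _ [_ [Hc _]].
move: (Hc u v) => /connectP [p Hp ->] {Hc}.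
elim: p u Hp => [|y p IH] u /=; first by exists [::].
move=> /andP [/existsP [f Hf] Hp].
have [w Hw] := IH y Hp.
exists (f :: w) => /=.
case/orP: Hf => /andP [/eqP Hs /eqP Ht].
  by rewrite Hs eqxx Ht.
case: eqP => Hs'.
  by rewrite Ht; rewrite Hs in Hs'; rewrite -Hs'.
by rewrite Ht eqxx Hs.
Qed.

Lemma dV_le (u v : V N) (w : seq (E N)) : walk_end u w = Some v -> dV u v <= walk_len w.
Proof.
move=> H; apply Rinf_le with 0.
  by move=> L [w' [_ ->]]; apply walk_len_ge0.
by exists w.
Qed.

Lemma dV_ge (u v : V N) m : (forall w : seq (E N), walk_end u w = Some v -> m <= walk_len w) -> m <= dV u v.
Proof.
move=> H; apply Rinf_ge.
  by move=> L [w' [Hw ->]]; apply H.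
have [w Hw] := walk_exists u v; by exists (walk_len w), w.
Qed.

Lemma dV_ge0 (u v : V N) : 0 <= dV u v.
Proof. apply dV_ge => w _; apply walk_len_ge0. Qed.

Lemma dV_refl (u : V N) : dV u u = 0.
Proof.
apply Rle_antisym; last by apply dV_ge0.
have := @dV_le u u [::] erefl; by rewrite /walk_len big_nil.
Qed.

Lemma dV_tri_st (u : V N) (f : E N) : dV u (tgt f) <= dV u (src f) + len f.
Proof.
suff : dV u (tgt f) - len f <= dV u (src f) by lra.
apply dV_ge => w Hw.
suff : dV u (tgt f) <= walk_len (w ++ [:: f]).
  by rewrite walk_len_cat walk_len_cons /walk_len big_nil; lra.
apply dV_le; by rewrite walk_end_cat Hw /= eqxx.
Qed.

Lemma dV_tri_ts (u : V N) (f : E N) : dV u (src f) <= dV u (tgt f) + len f.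
Proof.
suff : dV u (src f) - len f <= dV u (tgt f) by lra.
apply dV_ge => w Hw.
suff : dV u (src f) <= walk_len (w ++ [:: f]).
  by rewrite walk_len_cat walk_len_cons /walk_len big_nil; lra.
apply dV_le; rewrite walk_end_cat Hw /=.
case: eqP => [->|_]; by rewrite ?eqxx.
Qed.

Lemma leaf_unique (v : V N) (e f : E N) : leaf v -> incident v e -> incident v f -> e = f.
Proof.
rewrite /leaf /deg => H1 He Hf; apply/eqP; apply/negP => /negP hne.
have : (1 < #|[pred g | incident v g]|)%N.
  apply/card_gt1P; exists e, f; split => //.
by rewrite H1.
Qed.

Lemma dV_leaf (v w : V N) (e : E N) : leaf v -> incident v e -> w <> v -> len e <= dV v w.
Proof.
move=> Hl He Hw; apply dV_ge => [[|f p]] /=.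
  by move=> [] /esym.
move=> Hend.
have Hf : incident v f.
  move: Hend; rewrite /incident; case: (src f == v) => //=.
  by case: (tgt f == v).
rewrite walk_len_cons (leaf_unique Hl He Hf); have := walk_len_ge0 p; lra.
Qed.

End Walks.

Lemma eqRbP a b : reflect (a = b) (eqRb a b).
Proof. rewrite /eqRb; case: Req_EM_T => h; constructor => //. Qed.
Lemma leRbP a b : reflect (a <= b) (leRb a b).
Proof. rewrite /leRb; case: Rle_dec => h; constructor => //. Qed.

Section Dist.
Variable N : network.
Hypothesis G : good_network N.

Lemma vertex_ofP (p : point N) v : vertex_of p = Some v ->
  (p.2 = 0 /\ v = src p.1) \/ (p.2 = len p.1 /\ v = tgt p.1).
Proof.
rewrite /vertex_of; case: eqRbP => h1; first by case=> <-; left.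
by case: eqRbP => h2 // [<-]; right.
Qed.

Lemma vertex_dist (c p : point N) v : valid_point c -> vertex_of p = Some v ->
  Defs.dist c p = Rmin (c.2 + dV (src c.1) v) (len c.1 - c.2 + dV (tgt c.1) v).
Proof.
case: c => g s [/= Hs1 Hs2]; case: p => f t /vertex_ofP /= [[-> ->]|[-> ->]].
- rewrite /Defs.dist /=.
  have h1 := dV_tri_ts G (src g) f. have h2 := dV_tri_ts G (tgt g) f.
  case: eqP => [Hgf|_]; last by rewrite /Rmin; repeat case: Rle_dec; lra.
  subst f.
  rewrite !dV_refl //.
  have h3 := Rle_abs (s - 0). have h4 := dV_ge0 G (tgt g) (src g).
  have h5 := dV_ge0 G (src g) (tgt g).
  by rewrite /Rmin; repeat case: Rle_dec; intros; lra.
- rewrite /Defs.dist /=.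
  have h1 := dV_tri_st G (src g) f. have h2 := dV_tri_st G (tgt g) f.
  have h5 := dV_ge0 G (src g) (src f). have h6 := dV_ge0 G (tgt g) (src f).
  have h7 := dV_ge0 G (src g) (tgt f). have h8 := dV_ge0 G (tgt g) (tgt f).
  case: eqP => [Hgf|_]; last by rewrite /Rmin; repeat case: Rle_dec; lra.
  subst f.
  rewrite !dV_refl //.
  have h3 := Rle_abs (- (s - len g)). rewrite Rabs_Ropp in h3.
  have h4 := dV_ge0 G (src g) (tgt g).
  by rewrite /Rmin; repeat case: Rle_dec; intros; lra.
Qed.

Lemma samept_dist (c p q : point N) : valid_point c -> samept p q -> Defs.dist c p = Defs.dist c q.
Proof.
move=> Hc; case/orP => [/andP [/eqP h1 /eqRbP h2]|/andP [/eqP h1 h2]].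
  by case: p q h1 h2 => [f t] [f' t'] /= -> ->.
case E1 : (vertex_of p) h1 h2 => [v|] // h1 _.
by rewrite (vertex_dist Hc E1) (vertex_dist Hc (esym h1)).
Qed.

End Dist.

Lemma samept_refl N (p : point N) : samept p p.
Proof. by rewrite /samept eqxx; apply/orP; left; apply/eqRbP. Qed.

Lemma samept_eq N (p q : point N) : samept p q ->
  p = q \/ (vertex_of p = vertex_of q /\ vertex_of p <> None).
Proof.
case/orP => [/andP [/eqP h1 /eqRbP h2]|/andP [/eqP h1 h2]].
  by left; case: p q h1 h2 => [f t] [f' t'] /= -> ->.
by right; split => //; move/eqP: h2.
Qed.

Lemma samept_sym N (p q : point N) : samept p q -> samept q p.
Proof.
case/samept_eq => [->|[h1 h2]]; first exact: samept_refl.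
apply/orP; right; rewrite h1 eqxx /=; rewrite -h1; exact/eqP.
Qed.

Lemma samept_trans N (p q r : point N) : samept p q -> samept q r -> samept p r.
Proof.
case/samept_eq => [->//|[h1 h2]].
case/samept_eq => [<-|[h3 h4]].
  by apply/orP; right; rewrite h1 eqxx /=; rewrite -h1; apply/eqP.
by apply/orP; right; rewrite h1 h3 eqxx /=; rewrite -h3 -h1; apply/eqP.
Qed.

Lemma iter_Rplus n a : iter n (Rplus a) 0 = INR n * a.
Proof. elim: n => [|n IH]; first by rewrite /=; ring. rewrite [iter _ _ _]/= IH S_INR; ring. Qed.

Lemma sum_const_pred (I : finType) (P : pred I) (a : R) :
  \big[Rplus/0]_(i | P i) a = INR #|P| * a.
Proof. by rewrite -iter_Rplus -big_const; apply eq_bigl. Qed.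

Section ShareSum.
Variable N : network.
Hypothesis G : good_network N.
Variable n : nat.
Variable x : profile N n.
Variable c : point N.
Hypothesis Hc : valid_point c.

Definition firstp (j : 'I_n) := [forall k : 'I_n, (k < j)%N ==> ~~ samept (x k) (x j)].
Definition rep (j : 'I_n) := [arg min_(k < j | samept (x k) (x j)) (k : nat)].

Lemma rep_same j : samept (x (rep j)) (x j).
Proof. rewrite /rep; case: arg_minnP => //; exact: samept_refl. Qed.

Lemma rep_min j k : samept (x k) (x j) -> (rep j <= k)%N.
Proof. rewrite /rep; case: arg_minnP => [|i _ H Hk]; [exact: samept_refl| exact: H]. Qed.

Lemma rep_first j : firstp (rep j).
Proof.
apply/forallP => k; apply/implyP => hk; apply/negP => hs.
have := rep_min (samept_trans hs (rep_same j)); rewrite leqNgt hk //.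
Qed.

Lemma rep_uniq j r : firstp r -> samept (x r) (x j) -> rep j = r.
Proof.
move=> /forallP Hf Hs; apply/val_inj/eqP; rewrite eqn_leq rep_min //=.
rewrite leqNgt; apply/negP => hlt.
have := implyP (Hf (rep j)) hlt; rewrite (samept_trans (rep_same j) (samept_sym Hs)) //.
Qed.

Lemma closest_same j k : samept (x k) (x j) -> closest x c k = closest x c j.
Proof.
move=> h; apply: eq_forallb => m; by rewrite (samept_dist G Hc h).
Qed.

Lemma coloc_same j k : samept (x k) (x j) -> nb_colocated x k = nb_colocated x j.
Proof.
move=> h; apply: eq_card => m; rewrite !inE.
apply/idP/idP => hm; [exact: samept_trans hm h| exact: samept_trans hm (samept_sym h)].
Qed.

Lemma share_sum : \big[Rplus/0]_(j : 'I_n) share x j c <= 1.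
Proof.
set L := nb_closest_locs x c.
have -> : \big[Rplus/0]_(j : 'I_n) share x j c =
          \big[Rplus/0]_(j | closest x c j) / (INR L * INR (nb_colocated x j)).
  by rewrite [in RHS]big_mkcond; apply eq_bigr => j _; rewrite /share.
rewrite (partition_big rep (fun r => closest x c r && firstp r)); last first.
  by move=> j hj; rewrite rep_first andbT (closest_same (rep_same j)).
rewrite (eq_bigr (fun _ => / INR L)); last first.
  move=> r /andP [hK hF].
  rewrite (eq_bigl (fun j => samept (x j) (x r))); last first.
    move=> j; apply/idP/idP.
      by move=> /andP [_ /eqP <-]; apply samept_sym, rep_same.
    move=> hs; rewrite (closest_same hs) hK /=; apply/eqP; apply rep_uniq => //.
    exact: samept_sym.
  rewrite (eq_bigr (fun _ => / (INR L * INR (nb_colocated x r)))); last first.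
    by move=> j hs; rewrite (coloc_same hs).
  rewrite sum_const_pred.
  have hC : (0 < nb_colocated x r)%N.
    by apply/card_gt0P; exists r; rewrite inE samept_refl.
  have hL : (0 < L)%N.
    by apply/card_gt0P; exists r; rewrite inE hK; exact: hF.
  have hC' : 0 < INR (nb_colocated x r) by apply lt_0_INR; apply/ltP.
  have hL' : 0 < INR L by apply lt_0_INR; apply/ltP.
  have -> : #|(fun i => samept (x i) (x r))| = nb_colocated x r by apply eq_card.
  field; lra.
rewrite sum_const_pred.
have -> : #|(fun r => closest x c r && firstp r)| = L by apply eq_card.
case: (posnP L) => [->|hL]; first by rewrite /= Rmult_0_l; lra.
have hL' : 0 < INR L by apply lt_0_INR; apply/ltP.
rewrite Rinv_r; lra.
Qed.

End ShareSum.

Section Deviation.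
Variable N : network.
Hypothesis G : good_network N.
Variable n : nat.
Variable x : profile N n.

Lemma dev_share_one j y (c : point N) : valid_point c ->
  (forall k, k != j -> Defs.dist c y < Defs.dist c (x k)) ->
  share (deviate x j y) j c = 1.
Proof.
move=> Hc H.
set x' := deviate x j y.
have x'j : x' j = y by rewrite /x' /deviate eqxx.
have x'k : forall k, k != j -> x' k = x k by move=> k hk; rewrite /x' /deviate (negbTE hk).
have Hns : forall k, k != j -> ~~ samept (x' k) (x' j).
  move=> k hk; apply/negP => hs; rewrite x'j (x'k k hk) in hs.
  have := H k hk; rewrite (samept_dist G Hc hs); lra.
have Hcl : forall k, closest x' c k = (k == j).
  move=> k; case: (eqVneq k j) => [->|hk].
    apply/forallP => m; apply/leRbP; rewrite x'j.
    case: (eqVneq m j) => [->|hm]; first by rewrite x'j; lra.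
    rewrite (x'k m hm); apply Rlt_le, H, hm.
  apply/negP => /forallP /(_ j) /leRbP; rewrite x'j (x'k k hk).
  have := H k hk; lra.
have Hcol : nb_colocated x' j = 1%N.
  rewrite /nb_colocated -(card1 j); apply: eq_card => k; rewrite !inE.
  case: (eqVneq k j) => [->|hk]; first by rewrite samept_refl.
  by rewrite (negbTE (Hns k hk)).
have Hloc : nb_closest_locs x' c = 1%N.
  rewrite /nb_closest_locs -(card1 j); apply: eq_card => k; rewrite !inE Hcl.
  case: (eqVneq k j) => [->|hk] //=.
  apply/forallP => m; apply/implyP => hm; apply Hns.
  by apply/eqP => hmj; rewrite hmj ltnn in hm.
rewrite /share Hcl eqxx Hloc Hcol /=; field.
Qed.

Lemma share_ge0 j (c : point N) : 0 <= share x j c.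
Proof.
rewrite /share; case: closest; last lra.
have h1 := pos_INR (nb_closest_locs x c); have h2 := pos_INR (nb_colocated x j).
case: (Req_dec (INR (nb_closest_locs x c) * INR (nb_colocated x j)) 0) => [->|h].
  rewrite Rinv_0; lra.
apply Rlt_le, Rinv_0_lt_compat; nra.
Qed.

Lemma RInt_share_ge0 j (e : E N) : 0 <= Defs.RInt (fun t => share x j (e, t)) 0 (len e).
Proof.
have hl := len_ge0 G e.
rewrite RInt_eq; last by apply share_int.
apply RInt_ge_0 => //; first by apply share_int.
move=> t _; apply share_ge0.
Qed.

Lemma payoff_lb j (e : E N) lo hi : 0 <= lo <= hi -> hi <= len e ->
  (forall u, lo < u < hi -> share x j (e, u) = 1) -> hi - lo <= payoff x j.
Proof.
move=> hlo hhi H.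
rewrite /payoff (bigD1 e) //=.
have : 0 <= \big[Rplus/0]_(i | i != e) Defs.RInt (fun t => share x j (i, t)) 0 (len i).
  apply: (big_ind (fun a => 0 <= a)); [lra| move=> a b; lra| move=> i _; apply RInt_share_ge0].
suff : hi - lo <= Defs.RInt (fun t => share x j (e, t)) 0 (len e) by lra.
rewrite RInt_eq; last by apply share_int; lra.
rewrite -(RInt_Chasles _ 0 lo (len e)); try (apply share_int; lra).
rewrite -(RInt_Chasles _ lo hi (len e)); try (apply share_int; lra).
have h1 : 0 <= RInt (fun t => share x j (e, t)) 0 lo.
  apply RInt_ge_0; [lra| apply share_int; lra| move=> t _; apply share_ge0].
have h2 : 0 <= RInt (fun t => share x j (e, t)) hi (len e).
  apply RInt_ge_0; [lra| apply share_int; lra| move=> t _; apply share_ge0].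
rewrite (RInt_ext (fun t => share x j (e, t)) (fun _ => 1) lo hi); last first.
  move=> t; rewrite Rmin_left ?Rmax_right; try lra; apply H.
rewrite RInt_const /scal /= /mult /= /plus /=.
lra.
Qed.

End Deviation.

Lemma sum_le (I : finType) (F H : I -> R) :
  (forall i, F i <= H i) -> \big[Rplus/0]_(i : I) F i <= \big[Rplus/0]_(i : I) H i.
Proof.
move=> h; apply: (big_ind2 (fun a b => a <= b)); [lra| move=> *; lra| move=> i _; apply h].
Qed.

Lemma payoff_sum N (G : good_network N) n (x : profile N n) :
  \big[Rplus/0]_(j : 'I_n) payoff x j <= Lambda N.
Proof.
rewrite /payoff exchange_big /Lambda; apply sum_le => e.
have hl := len_ge0 G e.
have E1 : \big[Rplus/0]_(j : 'I_n) Defs.RInt (fun t => share x j (e, t)) 0 (len e) =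
  \big[Rplus/0]_(j : 'I_n) RInt (fun t => share x j (e, t)) 0 (len e).
  by apply eq_bigr => j _; apply RInt_eq; apply share_int.
rewrite E1.
have [H1 H2] := @RInt_big _ (index_enum (ordinal n)) (fun j t => share x j (e, t)) 0 (len e)
  (fun j => @share_int N n x j e 0 (len e) hl).
rewrite -H2.
apply Rle_trans with (RInt (fun _ => 1) 0 (len e)); last first.
  by rewrite RInt_const /scal /= /mult /=; lra.
apply RInt_le => //; first exact: ex_RInt_const.
move=> t ht; apply (share_sum G x); split => /=; lra.
Qed.

Lemma INR_pred m : (0 < m)%N -> INR m = INR m.-1 + 1.
Proof. by case: m => // m _; rewrite S_INR. Qed.

Lemma sum_lt (I : finType) (i0 : I) (F H : I -> R) :
  (forall i, F i < H i) -> \big[Rplus/0]_(i : I) F i < \big[Rplus/0]_(i : I) H i.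
Proof.
move=> h; rewrite (bigD1 i0) // [X in _ < X](bigD1 i0) //=.
have : \big[Rplus/0]_(i | i != i0) F i <= \big[Rplus/0]_(i | i != i0) H i.
  apply: (big_ind2 (fun a b => a <= b)); [lra| move=> *; lra| move=> i _; apply Rlt_le, h].
have := h i0; lra.
Qed.

Lemma pigeon N (G : good_network N) n (x : profile N n) (i0 : 'I_n) :
  exists j, payoff x j <= Lambda N / INR n.
Proof.
have hn : 0 < INR n by apply lt_0_INR; apply/ltP; case: i0 => /= m hm; apply: leq_ltn_trans hm.
apply NNPP => hne.
have hall : forall j, Lambda N / INR n < payoff x j.
  by move=> j; apply Rnot_le_lt => h; apply hne; exists j.
have := payoff_sum G x.
have := sum_lt i0 hall.
rewrite big_const_ord iter_Rplus.
have : INR n * (Lambda N / INR n) = Lambda N by field; lra.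
move=> H H0 H1; have := Rlt_le_trans _ _ _ H0 H1; lra.
Qed.

Lemma dev_ok N (G : good_network N) n (x : profile N n) j (e : E N) y lo hi :
  nash_equilibrium x -> payoff x j <= Lambda N / INR n -> valid_point y ->
  0 <= lo <= hi -> hi <= len e ->
  (forall u, lo < u < hi -> forall k, k != j -> Defs.dist (e, u) y < Defs.dist (e, u) (x k)) ->
  hi - lo <= Lambda N / INR n.
Proof.
move=> [Hval Hn] Hj Hy hlo hhi H.
have := Hn j y Hy.
have := @payoff_lb N G n (deviate x j y) j e lo hi hlo hhi.
have Hs : forall u, lo < u < hi -> share (deviate x j y) j (e, u) = 1.
  move=> u hu; apply (dev_share_one G); first by split => /=; lra.
  by apply H.
move=> /(_ Hs); lra.
Qed.

Lemma dist_lb N (e : E N) u (q : point N) Ps Pt T :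
  Ps <= dV (src e) (src q.1) + q.2 -> Ps <= dV (src e) (tgt q.1) + (len q.1 - q.2) ->
  Pt <= dV (tgt e) (src q.1) + q.2 -> Pt <= dV (tgt e) (tgt q.1) + (len q.1 - q.2) ->
  T <= u + Ps -> T <= len e - u + Pt -> (q.1 = e -> T <= Rabs (u - q.2)) ->
  T <= Defs.dist (e, u) q.
Proof.
move=> h1 h2 h3 h4 h5 h6 h7; rewrite /Defs.dist /=.
case: eqP => h.
  apply Rmin_glb; first by apply h7.
  repeat apply Rmin_glb; lra.
repeat apply Rmin_glb; lra.
Qed.

Lemma dist_self_le N (e : E N) u s : Defs.dist (e, u) (e, s) <= Rabs (u - s).
Proof. rewrite /Defs.dist /= eqxx; apply Rmin_l. Qed.

Lemma pt_eq N (q : point N) e : q.1 = e -> q = (e, q.2).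
Proof. by case: q => f t /= ->. Qed.

Lemma Lambda_ge0 N (G : good_network N) : 0 <= Lambda N.
Proof.
rewrite /Lambda; apply: (big_ind (fun a => 0 <= a)); [lra| move=> *; lra| move=> i _; apply (len_ge0 G)].
Qed.

Lemma incE N (v : V N) (f : E N) : incident v f = (src f == v) || (tgt f == v).
Proof. by []. Qed.

Theorem main_aux (N : network) (n : nat) (x : profile N n)
  (e : E N) (sa sb : R) :
  good_network N ->
  nash_equilibrium x ->
  vertex_property x ->
  half_interval x e sa sb ->
  Rabs (sb - sa) <= Lambda N / INR n.
Proof.
move=> G Hnash _ [Hsa [Hsb Hcase]].
have Hval : valid_profile x by case: Hnash.
have st : src e <> tgt e by case: G => h _; apply h.
have He : 0 < len e by case: G => _ [_ [_ [_ h]]]; apply h.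
have [i0 _] : exists i0 : 'I_n, True.
  by case: Hcase => [[[i _] _]|[i _]]; exists i.
have hn : 0 < INR n by apply lt_0_INR; apply/ltP; case: i0 => /= m hm; apply: leq_ltn_trans hm.
have hL : 0 <= Lambda N / INR n.
  apply Rmult_le_pos; [apply (Lambda_ge0 G)| apply Rlt_le, Rinv_0_lt_compat, hn].
have [j Hj] := pigeon G x i0.
have Hdev := dev_ok G Hnash Hj.
case: Hcase => [[_ [Hleaf Hnone]]|[_ [_ [tl [_ [Htl [_ [Hbet ->]]]]]]]].
-
  case: Hleaf => [[Hsb0 Hlf]|[Hsb0 Hlf]]; subst sb.
  + rewrite Rminus_0_l Rabs_Ropp Rabs_right; last lra.
    apply Rnot_lt_le => hc.
    set d := Rmin (sa / 2) (sa - Lambda N / INR n).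
    have d1 : d <= sa / 2 by apply Rmin_l.
    have d2 : d <= sa - Lambda N / INR n by apply Rmin_r.
    have d0 : 0 < d by apply Rmin_glb_lt; lra.
    have : sa - d / 2 - 0 <= Lambda N / INR n; last lra.
    apply (Hdev e (e, sa - d)); [split => /=; lra| lra| lra|].
    move=> u hu k hk.
    apply Rle_lt_trans with (Rabs (u - (sa - d))); first by apply dist_self_le.
    apply Rlt_le_trans with (sa - u); first by apply Rabs_def1; lra.
    have [hq1 hq2] := Hval k.
    set q := x k in hq1 hq2 *.
    have Hq : q.1 = e -> sa <= q.2.
      move=> hqe; apply Rnot_lt_le => hlt.
      have hs : samept q (e, q.2) by rewrite {1}(pt_eq hqe) samept_refl.
      case: (Req_dec q.2 0) => h0.
        by move: (Hnone k 0 (or_intror erefl)); rewrite -/q -h0 hs.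
      have hpos : 0 < q.2.
        case: (Rle_lt_or_eq_dec _ _ hq1) => // h'; exfalso; apply h0; rewrite -h' //.
      by move: (Hnone k q.2 (or_introl (or_intror (conj hpos hlt)))); rewrite -/q hs.
    have hs : incident (src e) e by rewrite incE eqxx.
    apply (dist_lb (Ps := sa) (Pt := 0)).
    * case: (eqVneq (src q.1) (src e)) => h.
        have hqe : q.1 = e by apply: (leaf_unique Hlf); [by rewrite incE h eqxx| by rewrite incE eqxx].
        have := Hq hqe; have := dV_ge0 G (src e) (src q.1); lra.
      have := dV_leaf G Hlf hs (elimN eqP h).
      lra.
    * case: (eqVneq (tgt q.1) (src e)) => h.
        have hqe : q.1 = e by apply: (leaf_unique Hlf); [by rewrite incE h eqxx orbT| by rewrite incE eqxx ?orbT].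
        by exfalso; apply st; rewrite -h hqe.
      have := dV_leaf G Hlf hs (elimN eqP h).
      lra.
    * have := dV_ge0 G (tgt e) (src q.1); lra.
    * have := dV_ge0 G (tgt e) (tgt q.1); lra.
    * lra.
    * lra.
    * move=> hqe; have := Hq hqe => h.
      rewrite Rabs_left1; lra.
  + rewrite Rabs_right; last lra.
    apply Rnot_lt_le => hc.
    set d := Rmin ((len e - sa) / 2) (len e - sa - Lambda N / INR n).
    have d1 : d <= (len e - sa) / 2 by apply Rmin_l.
    have d2 : d <= len e - sa - Lambda N / INR n by apply Rmin_r.
    have d0 : 0 < d by apply Rmin_glb_lt; lra.
    have : len e - (sa + d / 2) <= Lambda N / INR n; last lra.
    apply (Hdev e (e, sa + d)); [split => /=; lra| lra| lra|].
    move=> u hu k hk.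
    apply Rle_lt_trans with (Rabs (u - (sa + d))); first by apply dist_self_le.
    apply Rlt_le_trans with (u - sa); first by apply Rabs_def1; lra.
    have [hq1 hq2] := Hval k.
    set q := x k in hq1 hq2 *.
    have Hq : q.1 = e -> q.2 <= sa.
      move=> hqe; apply Rnot_lt_le => hlt.
      have hs : samept q (e, q.2) by rewrite {1}(pt_eq hqe) samept_refl.
      have hq2' : q.2 <= len e by rewrite -hqe.
      case: (Req_dec q.2 (len e)) => h0.
        by move: (Hnone k (len e) (or_intror erefl)); rewrite -/q -h0 hs.
      have hpos : q.2 < len e.
        case: (Rle_lt_or_eq_dec _ _ hq2') => // h'; exfalso; apply h0; rewrite h' //.
      by move: (Hnone k q.2 (or_introl (or_introl (conj hlt hpos)))); rewrite -/q hs.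
    have ht : incident (tgt e) e by rewrite incE eqxx orbT.
    apply (dist_lb (Ps := 0) (Pt := len e - sa)).
    * have := dV_ge0 G (src e) (src q.1); lra.
    * have := dV_ge0 G (src e) (tgt q.1); lra.
    * case: (eqVneq (src q.1) (tgt e)) => h.
        have hqe : q.1 = e by apply: (leaf_unique Hlf); [by rewrite incE h eqxx| exact ht].
        by exfalso; apply st; rewrite -h hqe.
      have := dV_leaf G Hlf ht (elimN eqP h).
      lra.
    * case: (eqVneq (tgt q.1) (tgt e)) => h.
        have hqe : q.1 = e by apply: (leaf_unique Hlf); [by rewrite incE h eqxx orbT| exact ht].
        have := Hq hqe; have := dV_ge0 G (tgt e) (tgt q.1); rewrite hqe; lra.
      have := dV_leaf G Hlf ht (elimN eqP h).
      lra.
    * lra.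
    * lra.
    * move=> hqe; have := Hq hqe => h.
      rewrite Rabs_right; lra.
-
  have Hq : forall k, (x k).1 = e -> ~ (Rmin sa tl < (x k).2 < Rmax sa tl).
    move=> k hqe hb.
    have hs : samept (x k) (e, (x k).2) by rewrite {1}(pt_eq hqe) samept_refl.
    suff hsb : strictly_between sa (x k).2 tl by move: (Hbet k _ hsb); rewrite hs.
    move: hb; rewrite /Rmin /Rmax; case: Rle_dec => h hb; [left|right]; lra.
  case: (Rtotal_order sa tl) => [hlt|[heq|hgt]].
  + rewrite Rabs_right; last lra.
    set d := (tl - sa) / 2.
    have hd : d = (tl - sa) / 2 by [].
    have : (sa + tl) / 2 + d / 2 - (sa + d / 2) <= Lambda N / INR n; last lra.
    apply (Hdev e (e, sa + d)); [split => /=; lra| lra| lra|].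
    move=> u hu k hk.
    apply Rle_lt_trans with (Rabs (u - (sa + d))); first by apply dist_self_le.
    apply Rlt_le_trans with (Rmin (u - sa) (tl - u)).
      apply Rabs_def1.
        apply Rmin_glb_lt; lra.
      have : - (u - (sa + d)) < Rmin (u - sa) (tl - u) by apply Rmin_glb_lt; lra.
      lra.
    have [hq1 hq2] := Hval k.
    have m1 := Rmin_l (u - sa) (tl - u); have m2 := Rmin_r (u - sa) (tl - u).
    apply (dist_lb (Ps := 0) (Pt := 0)).
    * have := dV_ge0 G (src e) (src (x k).1); lra.
    * have := dV_ge0 G (src e) (tgt (x k).1); lra.
    * have := dV_ge0 G (tgt e) (src (x k).1); lra.
    * have := dV_ge0 G (tgt e) (tgt (x k).1); lra.
    * lra.
    * lra.
    * move=> hqe; have := Hq k hqe; rewrite Rmin_left ?Rmax_right; try lra.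
      move=> hn'; case: (Rle_lt_dec (x k).2 sa) => h.
        rewrite Rabs_right; lra.
      rewrite Rabs_left1; lra.
  + rewrite heq; have -> : (tl + tl) / 2 - tl = 0 by field.
    rewrite Rabs_R0; lra.
  + rewrite Rabs_left1; last lra.
    set d := (sa - tl) / 2.
    have hd : d = (sa - tl) / 2 by [].
    have : sa - d / 2 - ((sa + tl) / 2 - d / 2) <= Lambda N / INR n; last lra.
    apply (Hdev e (e, sa - d)); [split => /=; lra| lra| lra|].
    move=> u hu k hk.
    apply Rle_lt_trans with (Rabs (u - (sa - d))); first by apply dist_self_le.
    apply Rlt_le_trans with (Rmin (u - tl) (sa - u)).
      apply Rabs_def1.
        apply Rmin_glb_lt; lra.
      have : - (u - (sa - d)) < Rmin (u - tl) (sa - u) by apply Rmin_glb_lt; lra.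
      lra.
    have [hq1 hq2] := Hval k.
    have m1 := Rmin_l (u - tl) (sa - u); have m2 := Rmin_r (u - tl) (sa - u).
    apply (dist_lb (Ps := 0) (Pt := 0)).
    * have := dV_ge0 G (src e) (src (x k).1); lra.
    * have := dV_ge0 G (src e) (tgt (x k).1); lra.
    * have := dV_ge0 G (tgt e) (src (x k).1); lra.
    * have := dV_ge0 G (tgt e) (tgt (x k).1); lra.
    * lra.
    * lra.
    * move=> hqe; have := Hq k hqe; rewrite Rmin_right ?Rmax_left; try lra.
      move=> hn'; case: (Rle_lt_dec (x k).2 tl) => h.
        rewrite Rabs_right; lra.
      rewrite Rabs_left1; lra.
Qed.
End Aux.

Unset Implicit Arguments.

Theorem mainTheorem13 (N : network) (n : nat) (x : profile N n)
  (e : E N) (sa sb : R) :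
  good_network N ->
  nash_equilibrium x ->
  vertex_property x ->
  half_interval x e sa sb ->
  Rabs (sb - sa) <= Lambda N / INR n.
Proof. exact: Aux.main_aux. Qed.
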